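(* For every $\kappa>1$ there exist $\rho\ge 1+\ln\kappa$ and a non-decreasing, concave, differentiable function $v:[0,1]\to\mathbb{R}_{\ge0}$ with $v(1)=1$ and $v'(0)/v(1)=\kappa$ such that for every price $p>0$ and every $z\in\arg\max_{z'\in[0,1]}(v(z')-pz')$, one has $p\,z\le 1/\rho$. Consequently, for a single agent whose valuation is $v$ with probability $1$, every linear pricing obtains revenue at most a $1/\rho$ fraction of the revenue $v(1)=1$ obtained by the non-linear pricing that charges $v(z)$ for fraction $z$.
   Context: Linear pricing at price $p$ per unit charges $pz$ for a fraction $z$ of a divisible item; a buyer with valuation $v$ buys a fraction maximizing $v(z)-pz$ over $z\in[0,1]$, and the seller's revenue is $p$ times that fraction. The curvature of $v$ is $v'(0)/v(1)$. *)

(* Defs.v *)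
From Stdlib Require Import Reals Lra.
Open Scope R_scope.

(* d is the derivative of v at x, relative to the domain [0,1]
   (one-sided at the endpoints 0 and 1, two-sided in the interior). *)
Definition deriv01 (v : R -> R) (x d : R) : Prop :=
  forall eps : R, 0 < eps -> exists delta : R, 0 < delta /\
    forall y : R, 0 <= y <= 1 -> y <> x -> Rabs (y - x) < delta ->
      Rabs ((v y - v x) / (y - x) - d) < eps.

Definition differentiable01 (v : R -> R) : Prop :=
  forall x : R, 0 <= x <= 1 -> exists d : R, deriv01 v x d.

Definition nondecreasing01 (v : R -> R) : Prop :=
  forall x y : R, 0 <= x -> x <= y -> y <= 1 -> v x <= v y.

Definition concave01 (v : R -> R) : Prop :=
  forall x y t : R, 0 <= x <= 1 -> 0 <= y <= 1 -> 0 <= t <= 1 ->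
    t * v x + (1 - t) * v y <= v (t * x + (1 - t) * y).

Definition nonneg01 (v : R -> R) : Prop :=
  forall x : R, 0 <= x <= 1 -> 0 <= v x.

Definition best_response (v : R -> R) (p z : R) : Prop :=
  0 <= z <= 1 /\ forall z' : R, 0 <= z' <= 1 -> v z' - p * z' <= v z - p * z.

(* Main.v *)
Require Import Defs.
From Stdlib Require Import Reals Lra.
Open Scope R_scope.

Lemma ln_le_m1 : forall r, 0 < r -> ln r <= r - 1.
Proof. intros r Hr. pose proof (exp_ineq1_le (ln r)). rewrite exp_ln in H; lra. Qed.

Lemma ln_lt_m1 : forall r, 0 < r -> r <> 1 -> ln r < r - 1.
Proof.
  intros r Hr H1. assert (ln r <> 0).
  { intro E. apply H1. rewrite <- (exp_ln r Hr), E. apply exp_0. }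
  pose proof (exp_ineq1 (ln r) H). rewrite exp_ln in H0; lra.
Qed.

Section Gen.
Variable f sg : R -> R.
Hypothesis Hsg : forall x y, 0 <= x <= 1 -> 0 <= y <= 1 -> f y <= f x + sg x * (y - x).

Lemma gen_concave : concave01 f.
Proof.
  intros x y t Hx Hy Ht.
  set (w := t * x + (1 - t) * y).
  assert (Hw : 0 <= w <= 1) by (unfold w; split; nra).
  pose proof (Hsg w x Hw Hx). pose proof (Hsg w y Hw Hy).
  assert (E : sg w * (t * (x - w) + (1 - t) * (y - w)) = 0) by (unfold w; ring).
  assert (t * f x <= t * (f w + sg w * (x - w))) by (apply Rmult_le_compat_l; lra).
  assert ((1-t) * f y <= (1-t) * (f w + sg w * (y - w))) by (apply Rmult_le_compat_l; lra).
  nra.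
Qed.

Hypothesis Hpos : forall x, 0 <= x <= 1 -> 0 <= sg x.

Lemma gen_nondec : nondecreasing01 f.
Proof.
  intros x y H1 H2 H3.
  pose proof (Hsg y x ltac:(lra) ltac:(lra)). pose proof (Hpos y ltac:(lra)). nra.
Qed.

Variable L : R.
Hypothesis HL : 0 < L.
Hypothesis Hlip : forall x y, 0 <= x <= 1 -> 0 <= y <= 1 -> Rabs (sg y - sg x) <= L * Rabs (y - x).

Lemma gen_deriv : forall x, 0 <= x <= 1 -> deriv01 f x (sg x).
Proof.
  intros x Hx eps He. exists (eps / L). split.
  { apply Rdiv_lt_0_compat; lra. }
  intros y Hy Hne Hd.
  set (q := (f y - f x) / (y - x)).
  assert (Hq : f y - f x = q * (y - x)) by (unfold q; field; lra).
  pose proof (Hsg x y Hx Hy). pose proof (Hsg y x Hy Hx).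
  assert (Hb : Rabs (q - sg x) <= Rabs (sg y - sg x)).
  { destruct (Rlt_or_le x y) as [Hxy|Hxy].
    - assert (q <= sg x).
      { apply Rmult_le_reg_r with (y - x); lra. }
      assert (sg y <= q).
      { apply Rmult_le_reg_r with (y - x); lra. }
      unfold Rabs; repeat destruct Rcase_abs; lra.
    - assert (Hxy' : y < x) by lra.
      assert (sg x <= q).
      { apply Rmult_le_reg_r with (x - y); lra. }
      assert (q <= sg y).
      { apply Rmult_le_reg_r with (x - y); lra. }
      unfold Rabs; repeat destruct Rcase_abs; lra. }
  pose proof (Hlip x y Hx Hy).
  assert (L * Rabs (y - x) < L * (eps / L)) by (apply Rmult_lt_compat_l; lra).
  replace (L * (eps / L)) with eps in H2 by (field; lra).
  lra.
Qed.
End Gen.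

Definition u (a z : R) : R := if Rle_dec z a then z / a else 1 + ln (z / a).
Definition s (a x : R) : R := / Rmax a x.

Section Concrete.
Variable a : R.
Hypothesis Ha : 0 < a.
Hypothesis Ha1 : a < 1.

Lemma u_super : forall x y, 0 <= x <= 1 -> 0 <= y <= 1 -> u a y <= u a x + s a x * (y - x).
Proof.
  intros x y Hx Hy. unfold u, s, Rmax.
  destruct (Rle_dec x a) as [Hxa|Hxa]; destruct (Rle_dec y a) as [Hya|Hya];
  destruct (Rle_dec a x) as [Hax|Hax].
  - assert (x = a) by lra. subst. unfold Rdiv; lra.
  - unfold Rdiv; lra.
  - assert (x = a) by lra. subst x.
    pose proof (ln_le_m1 (y / a) ltac:(apply Rdiv_lt_0_compat; lra)).
    unfold Rdiv in *; lra.
  - pose proof (ln_le_m1 (y / a) ltac:(apply Rdiv_lt_0_compat; lra)).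
    unfold Rdiv in *; lra.
  - pose proof (ln_le_m1 (a / x) ltac:(apply Rdiv_lt_0_compat; lra)).
    assert (ln (a / x) = - ln (x / a)).
    { rewrite <- ln_Rinv. f_equal. field. lra. apply Rdiv_lt_0_compat; lra. }
    assert (Hxp : 0 < x) by lra.
    assert (/ x <= / a) by (apply Rinv_le_contravar; lra).
    assert (Hia : a * / a = 1) by (field; lra).
    assert (Hix : x * / x = 1) by (field; lra).
    assert (y * (/ a - / x) <= a * (/ a - / x)) by (apply Rmult_le_compat_r; lra).
    assert (E1 : / x * (y - x) = y * / x - 1) by (field; lra).
    assert (E2 : a * (/ a - / x) = 1 - a * / x) by (field; lra).
    rewrite E1. unfold Rdiv in *. lra.
  - lra.
  - assert (Hxp : 0 < x) by lra.
    assert (ln (y / a) = ln (y / x) + ln (x / a)).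
    { rewrite <- ln_mult. f_equal. field. lra. apply Rdiv_lt_0_compat; lra. apply Rdiv_lt_0_compat; lra. }
    pose proof (ln_le_m1 (y / x) ltac:(apply Rdiv_lt_0_compat; lra)).
    assert (Hix : x * / x = 1) by (field; lra).
    unfold Rdiv in *. nra.
  - lra.
Qed.

Lemma s_pos : forall x, 0 <= x <= 1 -> 0 < s a x.
Proof. intros. unfold s. apply Rinv_0_lt_compat. unfold Rmax; destruct Rle_dec; lra. Qed.

Lemma s_lip : forall x y, 0 <= x <= 1 -> 0 <= y <= 1 ->
  Rabs (s a y - s a x) <= (/ (a * a)) * Rabs (y - x).
Proof.
  intros x y Hx Hy. unfold s.
  set (A := Rmax a x). set (B := Rmax a y).
  assert (HA : a <= A) by (unfold A, Rmax; destruct Rle_dec; lra).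
  assert (HB : a <= B) by (unfold B, Rmax; destruct Rle_dec; lra).
  assert (HAB : Rabs (A - B) <= Rabs (y - x)).
  { unfold A, B, Rmax. destruct (Rle_dec a x); destruct (Rle_dec a y);
    unfold Rabs; repeat destruct Rcase_abs; lra. }
  replace (/ B - / A) with ((A - B) * / (A * B)) by (field; lra).
  rewrite Rabs_mult. rewrite (Rabs_right (/ (A * B))).
  2: { left. apply Rinv_0_lt_compat. nra. }
  assert (/ (A * B) <= / (a * a)).
  { apply Rinv_le_contravar. nra. nra. }
  assert (0 <= Rabs (A - B)) by apply Rabs_pos.
  apply Rle_trans with (Rabs (A - B) * / (a * a)).
  apply Rmult_le_compat_l; lra.
  rewrite Rmult_comm. apply Rmult_le_compat_l; [left; apply Rinv_0_lt_compat; nra| lra].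
Qed.
End Concrete.

Theorem mainTheorem12 :
  forall kappa : R, 1 < kappa ->
  exists (rho : R) (v : R -> R) (d0 : R),
    1 + ln kappa <= rho /\
    nonneg01 v /\ nondecreasing01 v /\ concave01 v /\ differentiable01 v /\
    v 1 = 1 /\ deriv01 v 0 d0 /\ d0 / v 1 = kappa /\
    (forall p z : R, 0 < p -> best_response v p z -> p * z <= (/ rho) * v 1).
Proof.
  intros kappa Hk.
  set (g := fun t => exp t - kappa * (1 + t)).
  assert (Hc : continuity g) by (unfold g; apply derivable_continuous; reg).
  assert (Hg0 : g 0 < 0) by (unfold g; rewrite exp_0; lra).
  assert (HgT : 0 < g (4 * kappa)).
  { unfold g. replace (4 * kappa) with (2 * kappa + 2 * kappa) by ring.
    rewrite exp_plus. pose proof (exp_ineq1_le (2 * kappa)). nra. }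
  destruct (IVT g 0 (4 * kappa) Hc ltac:(lra) Hg0 HgT) as [t [Ht Hgt]].
  unfold g in Hgt.
  assert (Htp : 0 < t).
  { destruct (Rle_lt_or_eq_dec 0 t (proj1 Ht)) as [h|h]; [lra|].
    subst t. rewrite exp_0 in Hgt. lra. }
  assert (Het : exp t = kappa * (1 + t)) by lra.
  set (a := / exp t). set (R0 := 1 + t).
  assert (Hexp1 : 1 < exp t) by (pose proof (exp_ineq1 t ltac:(lra)); lra).
  assert (Ha : 0 < a) by (unfold a; apply Rinv_0_lt_compat; lra).
  assert (Ha1 : a < 1).
  { unfold a. rewrite <- Rinv_1. apply Rinv_lt_contravar; lra. }
  assert (HR : 0 < R0) by (unfold R0; lra).
  set (v := fun z => u a z / R0).
  assert (Hu1 : u a 1 = R0).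
  { unfold u. destruct (Rle_dec 1 a); [lra|].
    unfold a, R0. replace (1 / / exp t) with (exp t) by (field; lra).
    rewrite ln_exp. ring. }
  assert (Hv1 : v 1 = 1) by (unfold v; rewrite Hu1; field; lra).
  set (sv := fun x => s a x / R0).
  assert (Hsup : forall x y, 0 <= x <= 1 -> 0 <= y <= 1 -> v y <= v x + sv x * (y - x)).
  { intros x y Hx Hy. unfold v, sv. pose proof (u_super a Ha x y Hx Hy).
    apply Rmult_le_reg_l with R0; [lra|].
    replace (R0 * (u a y / R0)) with (u a y) by (field; lra).
    replace (R0 * (u a x / R0 + s a x / R0 * (y - x))) with (u a x + s a x * (y - x)) by (field; lra).
    lra. }
  assert (Hsvp : forall x, 0 <= x <= 1 -> 0 <= sv x).
  { intros. unfold sv. pose proof (s_pos a Ha x H). apply Rlt_le, Rdiv_lt_0_compat; lra. }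
  assert (Hlip : forall x y, 0 <= x <= 1 -> 0 <= y <= 1 ->
     Rabs (sv y - sv x) <= (/ (a * a) / R0) * Rabs (y - x)).
  { intros x y Hx Hy. unfold sv. pose proof (s_lip a Ha x y Hx Hy).
    replace (s a y / R0 - s a x / R0) with ((s a y - s a x) * / R0) by (field; lra).
    rewrite Rabs_mult, (Rabs_right (/ R0)) by (left; apply Rinv_0_lt_compat; lra).
    unfold Rdiv. replace (/ (a * a) * / R0 * Rabs (y - x)) with (/ (a * a) * Rabs (y - x) * / R0) by ring.
    apply Rmult_le_compat_r; [left; apply Rinv_0_lt_compat; lra| lra]. }
  assert (HL : 0 < / (a * a) / R0).
  { apply Rdiv_lt_0_compat; [apply Rinv_0_lt_compat; nra| lra]. }
  exists R0, v, (sv 0).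
  split.
  { unfold R0. assert (ln kappa <= t).
    { rewrite <- (ln_exp t). destruct (Rle_lt_or_eq_dec kappa (exp t)).
      - rewrite Het. nra.
      - left. apply ln_increasing; lra.
      - right. rewrite e. reflexivity. }
    lra. }
  split.
  { intros x Hx. unfold v, u. apply Rmult_le_pos; [| left; apply Rinv_0_lt_compat; lra].
    destruct Rle_dec.
    - apply Rmult_le_pos; [lra | left; apply Rinv_0_lt_compat; lra].
    - assert (0 <= ln (x / a)).
      { rewrite <- ln_1. destruct (Rle_lt_or_eq_dec 1 (x / a)).
        + apply Rmult_le_reg_r with a; [lra|]. unfold Rdiv.
          rewrite Rmult_assoc, Rinv_l by lra. lra.
        + left. apply ln_increasing; lra.
        + rewrite e. lra. }
      lra. }
  split. { apply (gen_nondec v sv); assumption. }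
  split. { apply (gen_concave v sv); assumption. }
  split. { intros x Hx. exists (sv x). apply (gen_deriv v sv Hsup (/ (a * a) / R0)); assumption. }
  split. { exact Hv1. }
  split. { apply (gen_deriv v sv Hsup (/ (a * a) / R0)); try assumption; lra. }
  split.
  { rewrite Hv1. unfold sv, s, Rmax. destruct (Rle_dec a 0); [lra|].
    unfold a, R0. replace kappa with (exp t / (1 + t)) by (field_simplify_eq; lra).
    field. lra. }
  intros p z Hp [Hz Hbr].
  rewrite Hv1, Rmult_1_r.
  set (P := p * R0).
  assert (HP : 0 < P) by (unfold P; nra).
  assert (Hbr' : forall w, 0 <= w <= 1 -> u a w - P * w <= u a z - P * z).
  { intros w Hw. pose proof (Hbr w Hw). unfold v in H.
    apply Rmult_le_reg_l with (/ R0). apply Rinv_0_lt_compat; lra.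
    replace (/ R0 * (u a w - P * w)) with (u a w / R0 - p * w) by (unfold P; field; lra).
    replace (/ R0 * (u a z - P * z)) with (u a z / R0 - p * z) by (unfold P; field; lra).
    exact H. }
  enough (P * z <= 1).
  { apply Rmult_le_reg_l with R0; [lra|]. rewrite Rinv_r by lra.
    unfold P in H. lra. }
  unfold u in Hbr'.
  destruct (Rle_dec z a) as [Hza|Hza].
  - pose proof (Hbr' 0 ltac:(lra)). destruct (Rle_dec 0 a); [|lra].
    assert (P * z <= z / a) by (unfold Rdiv in *; lra).
    assert (z / a <= 1).
    { apply Rmult_le_reg_r with a; [lra|]. unfold Rdiv. rewrite Rmult_assoc, Rinv_l by lra. lra. }
    lra.
  - destruct (Rle_dec P 1) as [HP1|HP1]. { nra. }
    destruct (Rle_dec (/ P) a) as [HPa|HPa].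
    + pose proof (Hbr' a ltac:(lra)). destruct (Rle_dec a a); [|lra].
      replace (a / a) with 1 in H by (field; lra).
      assert (HPa' : 1 <= P * a).
      { apply Rmult_le_reg_l with (/ P). apply Rinv_0_lt_compat; lra.
        rewrite <- Rmult_assoc, Rinv_l, Rmult_1_l, Rmult_1_r by lra. exact HPa. }
      pose proof (ln_lt_m1 (z / a) ltac:(apply Rdiv_lt_0_compat; lra)
                   ltac:(intro E; apply Hza; right; field_simplify_eq in E; lra)).
      assert (Hza' : z / a - 1 = (z - a) * / a) by (field; lra).
      assert (P * (z - a) <= ln (z / a)) by lra.
      assert ((z - a) * / a <= (z - a) * P).
      { apply Rmult_le_compat_l; [lra|].
        apply Rmult_le_reg_l with a; [lra|]. rewrite Rinv_r by lra. lra. }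
      lra.
    + assert (Hw : 0 <= / P <= 1).
      { split. left; apply Rinv_0_lt_compat; lra.
        rewrite <- Rinv_1. apply Rinv_le_contravar; lra. }
      pose proof (Hbr' (/ P) Hw). destruct (Rle_dec (/ P) a); [lra|].
      rewrite Rinv_r in H by lra.
      destruct (Rle_dec (P * z) 1) as [h|h]; [exact h|exfalso].
      assert (ln (/ P / a) = ln (z / a) - ln (P * z)).
      { replace (/ P / a) with ((z / a) * / (P * z)) by (field; lra).
        rewrite ln_mult, ln_Rinv. ring. nra. apply Rdiv_lt_0_compat; lra.
        apply Rinv_0_lt_compat; nra. }
      pose proof (ln_lt_m1 (P * z) ltac:(nra) ltac:(lra)).
      lra.
Qed.
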